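(* Let $p$ be an even positive integer and $\mathbb{H}$ any real Hilbert space (of dimension at least $2$). Let $T\in\mathbb{L}(\mathbb{H},\ell_p^2)$ be of rank one with $\|T\|=1$. Then $T$ is not an extreme contraction.
   Context: $\ell_p^2$ is $\mathbb{R}^2$ with norm $\|(a,b)\|=(|a|^p+|b|^p)^{1/p}$. An extreme contraction is a norm one operator that is an extreme point of the closed unit ball of $\mathbb{L}(\mathbb{H},\ell_p^2)$ (bounded linear operators, operator norm). *)

(* Defs.v *)
From HB Require Import structures.
From mathcomp Require Import all_boot all_order all_algebra.
From mathcomp Require Import all_classical all_reals all_analysis.
Set Implicit Arguments. Unset Strict Implicit. Unset Printing Implicit Defensive.
Import Order.TTheory GRing.Theory Num.Theory.
Import numFieldNormedType.Exports.
Local Open Scope classical_set_scope.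
Local Open Scope ring_scope.

(* A real Hilbert space: a complete real normed space whose norm comes from
   an inner product ip (bilinear, symmetric, with |x|^2 = ip x x). *)
Definition is_inner_product (R : realType) (V : completeNormedModType R)
  (ip : V -> V -> R) : Prop :=
  (forall a x y z, ip (a *: x + y) z = a * ip x z + ip y z) /\
  (forall x y, ip x y = ip y x) /\
  (forall x, `|x| ^+ 2 = ip x x).

Definition dim_ge2 (R : realType) (V : completeNormedModType R) : Prop :=
  exists x y : V, forall a b : R, a *: x + b *: y = 0 -> a = 0 /\ b = 0.

Definition lp2norm (R : realType) (p : nat) (v : R * R) : R :=
  (`|v.1| ^+ p + `|v.2| ^+ p) `^ (p%:R^-1).

Definition is_linear_op (R : realType) (V : completeNormedModType R)
  (T : V -> R * R) : Prop :=
  forall (a : R) (x y : V),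
    T (a *: x + y) = (a * (T x).1 + (T y).1, a * (T x).2 + (T y).2).

Definition is_bounded_op (R : realType) (p : nat) (V : completeNormedModType R)
  (T : V -> R * R) : Prop :=
  exists C : R, forall x : V, lp2norm p (T x) <= C * `|x|.

Definition BL (R : realType) (p : nat) (V : completeNormedModType R)
  (T : V -> R * R) : Prop := is_linear_op T /\ is_bounded_op p T.

Definition opnorm (R : realType) (p : nat) (V : completeNormedModType R)
  (T : V -> R * R) : R :=
  sup [set lp2norm p (T x) | x in [set x : V | `|x| <= 1]].

Definition unit_ball_op (R : realType) (p : nat) (V : completeNormedModType R)
  (T : V -> R * R) : Prop := BL p T /\ opnorm p T <= 1.

Definition op_comb (R : realType) (V : completeNormedModType R) (t : R)
  (S1 S2 : V -> R * R) : V -> R * R :=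
  fun x => (t * (S1 x).1 + (1 - t) * (S2 x).1, t * (S1 x).2 + (1 - t) * (S2 x).2).

Definition extreme_point_ball (R : realType) (p : nat) (V : completeNormedModType R)
  (T : V -> R * R) : Prop :=
  unit_ball_op p T /\
  forall (S1 S2 : V -> R * R) (t : R),
    unit_ball_op p S1 -> unit_ball_op p S2 -> 0 < t < 1 ->
    T = op_comb t S1 S2 -> S1 = T /\ S2 = T.

Definition extreme_contraction (R : realType) (p : nat) (V : completeNormedModType R)
  (T : V -> R * R) : Prop :=
  opnorm p T = 1 /\ extreme_point_ball p T.

Definition rank_one (R : realType) (V : completeNormedModType R)
  (T : V -> R * R) : Prop :=
  (exists x, T x != (0, 0)) /\
  exists v : R * R, forall x, exists c : R, T x = (c * v.1, c * v.2).

(* Main.v *)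
Require Import Defs.
From HB Require Import structures.
From mathcomp Require Import all_boot all_order all_algebra.
From mathcomp Require Import all_classical all_reals all_analysis.
From mathcomp Require Import ring lra.
Import Order.TTheory GRing.Theory Num.Theory.
Import numFieldNormedType.Exports.
Local Open Scope ring_scope.

Lemma Ebound (R : realFieldType) (n : nat) (y t : R) :
  `|(y + t) ^+ n.+2 - y ^+ n.+2 - (n.+2)%:R * y ^+ n.+1 * t|
    <= (n.+2)%:R ^+ 2 * t ^+ 2 * (`|y| + `|t|) ^+ n.
Proof.
elim: n => [|n IH].
  have -> : (y + t) ^+ 2 - y ^+ 2 - 2%:R * y ^+ 1 * t = t ^+ 2 by ring.
  rewrite ger0_norm ?sqr_ge0 // expr0 mulr1.
  have := sqr_ge0 t; lra.
set E := (y + t) ^+ n.+2 - _ - _ in IH.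
have -> : (y + t) ^+ n.+3 - y ^+ n.+3 - (n.+3)%:R * y ^+ n.+2 * t
    = (y + t) * E + (n.+2)%:R * y ^+ n.+1 * t ^+ 2.
  rewrite /E -!natr1 !exprS; ring.
set S := `|y| + `|t|.
have S0 : 0 <= S by rewrite addr_ge0.
have yS : `|y| <= S by rewrite /S lerDl.
have ytS : `|y + t| <= S by apply: ler_normD.
have Z0 : 0 <= t ^+ 2 * S ^+ n by rewrite mulr_ge0 ?sqr_ge0 ?exprn_ge0.
apply: (le_trans (ler_normD _ _)).
rewrite normrM [`|_ * t ^+ 2|]normrM [`|_ * y ^+ _|]normrM normrX.
rewrite normr_nat normrX real_normK ?num_real //.
set a : R := n%:R.
have a0 : 0 <= a by rewrite ler0n.
have e2 : (n.+2)%:R = a + 2 by rewrite -!natr1 /a; ring.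
have e3 : (n.+3)%:R = a + 3 by rewrite -!natr1 /a; ring.
rewrite e2 e3; rewrite e2 in IH.
set Z := t ^+ 2 * S ^+ n in Z0.
have h1 : `|y + t| * `|E| <= S * ((a + 2) ^+ 2 * Z).
  apply: ler_pM; [exact: normr_ge0|exact: normr_ge0|exact: ytS|].
  by rewrite /Z mulrA.
have h2 : `|y| ^+ n.+1 <= S * S ^+ n.
  by rewrite -exprS; apply: lerXn2r; rewrite ?nnegrE.
have h3 : (a + 2) * `|y| ^+ n.+1 * t ^+ 2 <= (a + 2) * (S * Z).
  have -> : (a + 2) * (S * Z) = (a + 2) * (S * S ^+ n) * t ^+ 2 by rewrite /Z; ring.
  by apply: ler_wpM2r; rewrite ?sqr_ge0 //; apply: ler_wpM2l => //; lra.
have -> : (a + 3) ^+ 2 * t ^+ 2 * S ^+ n.+1 = (a + 3) ^+ 2 * (S * Z) by rewrite /Z [S ^+ n.+1]exprS; ring.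
have SZ : 0 <= S * Z by rewrite mulr_ge0.
move: h1 h3 SZ a0; set W := S * Z; set U := `|y + t| * `|E|; set U2 := (a + 2) * _ * _.
move=> h1 h3 SZ a0.
have : S * ((a + 2) ^+ 2 * Z) = (a+2)^+2 * W by rewrite /W; ring.
nra.
Qed.

Lemma sqk (R : realFieldType) (k : nat) (x : R) : x ^+ k.*2 = (x ^+ 2) ^+ k.
Proof. by rewrite -muln2 mulnC exprM. Qed.

Lemma sqk2 (R : realFieldType) (k : nat) (x : R) : x ^+ (k.*2).+2 = (x ^+ 2) ^+ k.+1.
Proof. by rewrite -doubleS sqk. Qed.

Lemma ev0 (R : realFieldType) (k : nat) (x : R) : 0 <= x ^+ (k.*2).+2.
Proof. by rewrite sqk2 exprn_ge0 ?sqr_ge0. Qed.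

Lemma evabs (R : realFieldType) (k : nat) (x : R) : `|x| ^+ (k.*2).+2 = x ^+ (k.*2).+2.
Proof. by rewrite !sqk2 real_normK ?num_real. Qed.

Lemma core (R : realFieldType) (k : nat) (v1 v2 w1 w2 s1 s2 mu c de al rho K S : R) :
  w1 = v2 ^+ (k.*2).+1 -> w2 = - v1 ^+ (k.*2).+1 ->
  s1 = `|v1| + `|w1| -> s2 = `|v2| + `|w2| ->
  0 < mu -> mu ^+ (k.*2).+2 <= v1 ^+ (k.*2).+2 + v2 ^+ (k.*2).+2 ->
  K = ((k.*2).+2)%:R ^+ 2 * (w1 ^+ 2 * s1 ^+ k.*2 + w2 ^+ 2 * s2 ^+ k.*2) / mu ^+ k.*2 ->
  S = s1 ^+ (k.*2).+2 + s2 ^+ (k.*2).+2 ->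
  `|de| <= 1 -> de ^+ 2 * (K + S) <= 1 ->
  0 <= rho -> al ^+ 2 <= rho ^+ 2 ->
  c ^+ (k.*2).+2 * (v1 ^+ (k.*2).+2 + v2 ^+ (k.*2).+2) <= (rho ^+ 2 - al ^+ 2) ^+ k.+1 ->
  (c * v1 + de * al * w1) ^+ (k.*2).+2 + (c * v2 + de * al * w2) ^+ (k.*2).+2
    <= rho ^+ (k.*2).+2.
Proof.
move=> hw1 hw2 hs1 hs2 mu0 hmu hK hS hde hdeKS rho0 hal hc.
set n := k.*2.
set Y := rho ^+ 2 - al ^+ 2.
have Y0 : 0 <= Y by rewrite /Y; lra.
have s10 : 0 <= s1 by rewrite hs1 addr_ge0.
have s20 : 0 <= s2 by rewrite hs2 addr_ge0.
have mun0 : 0 < mu ^+ n by rewrite exprn_gt0.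
have K0 : 0 <= K.
  rewrite hK divr_ge0 ?(ltW mun0) // mulr_ge0 ?sqr_ge0 // addr_ge0 //
    mulr_ge0 ?sqr_ge0 ?exprn_ge0 //.
have S0 : 0 <= S by rewrite hS addr_ge0 ?exprn_ge0.
have deK : de ^+ 2 * K <= 1.
  have := mulr_ge0 (sqr_ge0 de) S0; rewrite mulrDr in hdeKS; lra.
have deS : de ^+ 2 * S <= 1.
  have := mulr_ge0 (sqr_ge0 de) K0; rewrite mulrDr in hdeKS; lra.
have rhop : rho ^+ n.+2 = Y ^+ 0 * rho ^+ n.+2 by rewrite expr0 mul1r.
set d := de * al.
have [hdc|hdc] := leP `|d| `|c|.
-
  have bnd : forall v w s : R, s = `|v| + `|w| -> 0 <= s ->
      (c * v + d * w) ^+ n.+2 <= (c * v) ^+ n.+2 + (n.+2)%:R * (c * v) ^+ n.+1 * (d * w)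
        + (n.+2)%:R ^+ 2 * (d * w) ^+ 2 * (`|c| * s) ^+ n.
    move=> v w s hs s0.
    have E1 := @Ebound R n (c * v) (d * w).
    have h1 : (`|c * v| + `|d * w|) ^+ n <= (`|c| * s) ^+ n.
      apply: lerXn2r; rewrite ?nnegrE ?addr_ge0 ?mulr_ge0 //.
      rewrite hs mulrDr [`|c * v|]normrM lerD2l [`|d * w|]normrM.
      apply: ler_wpM2r; [exact: normr_ge0|exact: hdc].
    have h2 : (n.+2)%:R ^+ 2 * (d * w) ^+ 2 * (`|c * v| + `|d * w|) ^+ n <=
        (n.+2)%:R ^+ 2 * (d * w) ^+ 2 * (`|c| * s) ^+ n.
      apply: ler_wpM2l; [apply: mulr_ge0; [exact: exprn_ge0 (ler0n _ _)|exact: sqr_ge0]|exact: h1].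
    have h3 := ler_norm ((c * v + d * w) ^+ n.+2 - (c * v) ^+ n.+2 -
                  (n.+2)%:R * (c * v) ^+ n.+1 * (d * w)).
    lra.
  have A1 := bnd v1 w1 s1 hs1 s10.
  have A2 := bnd v2 w2 s2 hs2 s20.
  have cross : (n.+2)%:R * (c * v1) ^+ n.+1 * (d * w1) +
      (n.+2)%:R * (c * v2) ^+ n.+1 * (d * w2) = 0.
    by rewrite hw1 hw2 !exprMn; ring.
  have Npart : (c * v1) ^+ n.+2 + (c * v2) ^+ n.+2 =
      c ^+ n.+2 * (v1 ^+ n.+2 + v2 ^+ n.+2) by rewrite !exprMn; ring.
  have Epart : (n.+2)%:R ^+ 2 * (d * w1) ^+ 2 * (`|c| * s1) ^+ n +
      (n.+2)%:R ^+ 2 * (d * w2) ^+ 2 * (`|c| * s2) ^+ n =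
      d ^+ 2 * ((`|c| ^+ n * mu ^+ n) * K).
    rewrite hK !exprMn; field.
    by rewrite expf_neq0 // lt0r_neq0.
  have cmu : `|c| ^+ n * mu ^+ n <= Y ^+ k.
    have h1 : (c * mu) ^+ n.+2 <= Y ^+ k.+1.
      apply: le_trans hc; rewrite exprMn; apply: ler_wpM2l; first exact: ev0.
      exact: hmu.
    rewrite sqk2 in h1.
    have h2 : (c * mu) ^+ 2 <= Y.
      by rewrite -(ler_pXn2r (ltn0Sn k)) ?nnegrE ?sqr_ge0.
    rewrite -exprMn sqk; apply: lerXn2r; rewrite ?nnegrE ?sqr_ge0 //.
    by rewrite exprMn real_normK ?num_real // -exprMn.
  have dK : d ^+ 2 * ((`|c| ^+ n * mu ^+ n) * K) <= al ^+ 2 * Y ^+ k.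
    rewrite /d exprMn.
    have -> : de ^+ 2 * al ^+ 2 * (`|c| ^+ n * mu ^+ n * K) =
       al ^+ 2 * ((`|c| ^+ n * mu ^+ n) * (de ^+ 2 * K)) by ring.
    apply: ler_wpM2l; first exact: sqr_ge0.
    apply: le_trans (_ : `|c| ^+ n * mu ^+ n * 1 <= _); last by rewrite mulr1.
    apply: ler_wpM2l => //; rewrite mulr_ge0 ?exprn_ge0 ?(ltW mu0) //.
  have hc' : c ^+ n.+2 * (v1 ^+ n.+2 + v2 ^+ n.+2) <= Y ^+ k.+1 by [].
  have fin : Y ^+ k.+1 + al ^+ 2 * Y ^+ k <= rho ^+ n.+2.
    have -> : Y ^+ k.+1 + al ^+ 2 * Y ^+ k = Y ^+ k * rho ^+ 2.
      by rewrite exprS /Y; ring.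
    rewrite /n sqk2 [(rho ^+ 2) ^+ k.+1]exprS mulrC; apply: ler_wpM2l; first exact: sqr_ge0.
    apply: lerXn2r; rewrite ?nnegrE ?sqr_ge0 //; rewrite /Y; have := sqr_ge0 al; lra.
  lra.
-
  have bnd : forall v w s : R, s = `|v| + `|w| -> 0 <= s ->
      (c * v + d * w) ^+ n.+2 <= `|d| ^+ n.+2 * s ^+ n.+2.
    move=> v w s hs s0.
    rewrite -evabs -exprMn; apply: lerXn2r; rewrite ?nnegrE ?mulr_ge0 //.
    apply: le_trans (ler_normD _ _) _; rewrite hs mulrDr [`|c * v|]normrM [`|d * w|]normrM lerD2r.
    apply: ler_wpM2r; [exact: normr_ge0|exact: ltW].
  have B1 := bnd v1 w1 s1 hs1 s10.
  have B2 := bnd v2 w2 s2 hs2 s20.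
  have hal' : `|al| <= rho.
    by rewrite -(ler_pXn2r (ltn0Sn 1)) ?nnegrE // real_normK ?num_real.
  have hd : `|d| ^+ n.+2 <= de ^+ 2 * rho ^+ n.+2.
    rewrite /d normrM exprMn.
    apply: ler_pM; [exact: exprn_ge0 (normr_ge0 _)|exact: exprn_ge0 (normr_ge0 _)| |].
      rewrite -(real_normK (num_real de)) -[n.+2]addn2 exprD.
      apply: ler_piMl; [exact: exprn_ge0 (normr_ge0 _)|exact: exprn_ile1 (normr_ge0 _) hde].
    by apply: lerXn2r; rewrite ?nnegrE ?normr_ge0.
  have : `|d| ^+ n.+2 * s1 ^+ n.+2 + `|d| ^+ n.+2 * s2 ^+ n.+2 <= rho ^+ n.+2.
    rewrite -mulrDr -hS.
    apply: le_trans (_ : de ^+ 2 * rho ^+ n.+2 * S <= _).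
      by apply: ler_wpM2r.
    rewrite mulrAC; apply: le_trans (_ : 1 * rho ^+ n.+2 <= _); last by rewrite mul1r.
    by apply: ler_wpM2r => //; rewrite exprn_ge0.
  lra.
Qed.

Lemma lp_le (R : realType) (p : nat) (z : R * R) (rho : R) : (0 < p)%N -> 0 <= rho ->
  (lp2norm p z <= rho) = (`|z.1| ^+ p + `|z.2| ^+ p <= rho ^+ p).
Proof.
move=> p0 r0.
have N0 : 0 <= `|z.1| ^+ p + `|z.2| ^+ p by rewrite addr_ge0 ?exprn_ge0.
have -> : `|z.1| ^+ p + `|z.2| ^+ p = (lp2norm p z) ^+ p.
  rewrite /lp2norm -powR_mulrn ?powR_ge0 // -powRrM mulVf ?powRr1 //.
  by rewrite pnatr_eq0 -lt0n.
by rewrite ler_pXn2r ?nnegrE ?powR_ge0.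
Qed.

Theorem mainTheorem13 (R : realType) (V : completeNormedModType R)
  (ip : V -> V -> R) (p : nat) (T : V -> R * R) :
  is_inner_product ip -> dim_ge2 V ->
  (0 < p)%N -> ~~ odd p ->
  BL p T -> rank_one T -> opnorm p T = 1 ->
  ~ extreme_contraction p T.
Proof.
move=> [ipl [ips ipn]] [x1 [y1 hind]] p0 pev [Tlin [C hC]] [[x0 hx0] [v hv]] hT1.
have [k pk] : exists k, p = (k.*2).+2.
  have := odd_double_half p; rewrite (negbTE pev) add0n.
  case e: (p./2) => [|j] hp; first by rewrite -hp in p0.
  by exists j; rewrite -hp doubleS.
subst p.
set n := k.*2.
have T0 : T 0 = (0, 0).
  have h := Tlin (-1) 0 0; rewrite scaler0 addr0 !mulN1r !addNr in h; exact: h.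
have TZ : forall a x, T (a *: x) = (a * (T x).1, a * (T x).2).
  move=> a x; have h := Tlin a x 0; rewrite addr0 T0 /= !addr0 in h; exact: h.
have ub : forall x, `|x| <= 1 -> lp2norm n.+2 (T x) <= 1.
  move=> x hx; rewrite -hT1 /opnorm; apply: ub_le_sup; last by exists x.
  exists `|C|; move=> _ [y hy <-]; apply: le_trans (hC y) _.
  apply: le_trans (_ : `|C| * `|y| <= _).
    by apply: ler_wpM2r; [exact: normr_ge0|exact: real_ler_norm (num_real C)].
  by apply: ler_piMr; [exact: normr_ge0|exact: hy].
have hTb : forall x, (T x).1 ^+ n.+2 + (T x).2 ^+ n.+2 <= `|x| ^+ n.+2.
  move=> x; have [->|xn0] := eqVneq x 0.
    by rewrite T0 /= normr0 !expr0n /= addr0.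
  set r := `|x|.
  have r0 : 0 < r by rewrite normr_gt0.
  have h := ub (r^-1 *: x).
  rewrite normrZ ger0_norm ?invr_ge0 ?(ltW r0) // mulVf ?lt0r_neq0 // lexx in h.
  have := h isT; rewrite lp_le // expr1n !evabs TZ /= !exprMn -mulrDr => h2.
  have -> : (T x).1 ^+ n.+2 + (T x).2 ^+ n.+2 =
      r ^+ n.+2 * (r^-1 ^+ n.+2 * ((T x).1 ^+ n.+2 + (T x).2 ^+ n.+2)).
    by rewrite mulrA -exprMn mulfV ?lt0r_neq0 // expr1n mul1r.
  by apply: ler_piMr => //; rewrite exprn_ge0 // ltW.
have vn0 : v.1 != 0 \/ v.2 != 0.
  have [c0 hc0] := hv x0.
  case: (eqVneq v.1 0) => h1; last by left.
  case: (eqVneq v.2 0) => h2; last by right.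
  by move: hx0; rewrite hc0 h1 h2 !mulr0 eqxx.
have [mu [mu0 hmu]] : exists mu, 0 < mu /\ mu ^+ n.+2 <= v.1 ^+ n.+2 + v.2 ^+ n.+2.
  case: vn0 => h.
    exists `|v.1|; split; first by rewrite normr_gt0.
    by rewrite evabs; have := @ev0 R k v.2; lra.
  exists `|v.2|; split; first by rewrite normr_gt0.
  by rewrite evabs; have := @ev0 R k v.1; lra.
set w1 := v.2 ^+ n.+1.
set w2 := - v.1 ^+ n.+1.
set s1 := `|v.1| + `|w1|.
set s2 := `|v.2| + `|w2|.
set K := (n.+2)%:R ^+ 2 * (w1 ^+ 2 * s1 ^+ n + w2 ^+ 2 * s2 ^+ n) / mu ^+ n.
set S := s1 ^+ n.+2 + s2 ^+ n.+2.
have s10 : 0 <= s1 by rewrite addr_ge0.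
have s20 : 0 <= s2 by rewrite addr_ge0.
have K0 : 0 <= K.
  rewrite /K divr_ge0 ?exprn_ge0 ?(ltW mu0) // mulr_ge0 ?sqr_ge0 // addr_ge0 //
    mulr_ge0 ?sqr_ge0 ?exprn_ge0 //.
have S0 : 0 <= S by rewrite addr_ge0 ?exprn_ge0.
set eps := (1 + K + S)^-1.
have D0 : 0 < 1 + K + S by lra.
have eps0 : 0 < eps by rewrite invr_gt0.
have epsD : eps * (1 + K + S) = 1 by rewrite mulVf ?lt0r_neq0.
have eps1 : eps <= 1.
  have h1 : eps * (K + S) >= 0 by apply: mulr_ge0; [exact: ltW|exact: addr_ge0].
  have h2 : eps * (1 + K + S) = eps + eps * (K + S) by ring.
  lra.
have eps2 : eps ^+ 2 * (K + S) <= 1.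
  have -> : eps ^+ 2 * (K + S) = eps * (eps * (1 + K + S)) - eps ^+ 2 by ring.
  rewrite epsD mulr1; have := sqr_ge0 eps; lra.
have [e [e0 Te]] : exists e, e != 0 /\ T e = (0, 0).
  have [a ha] := hv x1; have [b hb] := hv y1.
  case: (eqVneq a 0) => ha0.
    exists x1; split; last by rewrite ha ha0 !mul0r.
    apply/eqP => hx; have := hind 1 0; rewrite hx scaler0 scale0r addr0.
    by move=> /(_ erefl) [] /eqP; rewrite oner_eq0.
  exists (b *: x1 + (- a) *: y1); split.
    apply/eqP => h; have [_ /eqP] := hind _ _ h.
    by rewrite oppr_eq0 (negbTE ha0).
  by rewrite Tlin TZ ha hb /=; congr pair; ring.
set e' := `|e|^-1 *: e.
have ne : 0 < `|e| by rewrite normr_gt0.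
have ne' : `|e'| = 1.
  by rewrite /e' normrZ ger0_norm ?invr_ge0 ?(ltW ne) // mulVf ?lt0r_neq0.
have ipe : ip e' e' = 1 by rewrite -ipn ne' expr1n.
have Te' : T e' = (0, 0) by rewrite /e' TZ Te /= !mulr0.
pose Sop (de : R) := fun x : V =>
  ((T x).1 + de * ip x e' * w1, (T x).2 + de * ip x e' * w2).
have hS : forall de, `|de| <= 1 -> de ^+ 2 * (K + S) <= 1 -> forall x,
    (Sop de x).1 ^+ n.+2 + (Sop de x).2 ^+ n.+2 <= `|x| ^+ n.+2.
  move=> de hde1 hde2 x.
  set al := ip x e'.
  set y := (- al) *: e' + x.
  have Ty : T y = T x.
    by rewrite /y Tlin Te' /= !mulr0 !add0r; case: (T x).
  have ipye : ip y e' = 0 by rewrite /y ipl ipe mulr1 addNr.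
  have hx : x = al *: e' + y by rewrite /y addrA -scalerDl subrr scale0r add0r.
  have nx : `|x| ^+ 2 = al ^+ 2 + `|y| ^+ 2.
    rewrite !ipn {1 2}hx ipl (ips e') ipl ipe ipye (ips y (al *: e' + y)) ipl.
    by rewrite (ips e' y) ipye; ring.
  have [c hc] := hv y.
  have hTy := hTb y.
  have hy2 : `|y| ^+ 2 = `|x| ^+ 2 - al ^+ 2 by rewrite nx; ring.
  rewrite hc /= !exprMn -mulrDr [`|y| ^+ _]sqk2 hy2 in hTy.
  have hal : al ^+ 2 <= `|x| ^+ 2 by rewrite nx; have := sqr_ge0 `|y|; lra.
  have := @core R k v.1 v.2 w1 w2 s1 s2 mu c de al `|x| K S erefl erefl erefl erefl
    mu0 hmu erefl erefl hde1 hde2 (normr_ge0 x) hal hTy.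
  by rewrite /Sop /= -Ty hc.
have ball : forall de, `|de| <= 1 -> de ^+ 2 * (K + S) <= 1 -> unit_ball_op n.+2 (Sop de).
  move=> de hde1 hde2; split; first split.
  - move=> a x z; rewrite /Sop Tlin ipl /=; congr pair; ring.
  - exists 1 => x; rewrite mul1r lp_le // ?normr_ge0 // !evabs; exact: hS.
  - rewrite /opnorm; apply: ge_sup.
      by exists (lp2norm n.+2 (Sop de 0)); exists 0 => //=; rewrite normr0 ler01.
    move=> _ [x hx <-]; rewrite lp_le // expr1n !evabs.
    apply: le_trans (hS de hde1 hde2 x) _.
    exact: exprn_ile1 (normr_ge0 _) hx.
move=> [_ [_ hext]].
have h1 : `|eps| <= 1 by rewrite ger0_norm // ltW.
have h2 : `|- eps| <= 1 by rewrite normrN.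
have h3 : (- eps) ^+ 2 * (K + S) <= 1 by rewrite sqrrN.
have hcomb : T = op_comb 2^-1 (Sop eps) (Sop (- eps)).
  apply: funext => x; rewrite /op_comb /Sop /=; case: (T x) => t1 t2 /=.
  by congr pair; field.
have h4 : 0 < (2^-1 : R) < 1.
  by rewrite invr_gt0 ltr0n /= invf_lt1 ?ltr0n // ltr1n.
have [hS1 _] := hext (Sop eps) (Sop (- eps)) 2^-1 (ball _ h1 eps2) (ball _ h2 h3) h4 hcomb.
have := congr1 (fun f => f e') hS1 => /=.
rewrite /Sop Te' ipe /= !add0r !mulr1 => -[] hw1 hw2.
move/eqP: hw1; move/eqP: hw2.
rewrite !mulf_eq0 (negbTE (lt0r_neq0 eps0)) /= /w1 /w2 oppr_eq0 !expf_eq0 /=.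
by case: vn0 => /negbTE ->.
Qed.
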